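(* Let $A$ be an $m\times n$ matrix with entries in $[-1,1]$, no zero column, and at most $L$ nonzero entries in each row, and let $H$ be the smallest absolute value of a nonzero entry of $A$. Then the expected shuffle size of DIMSUM with parameter $\gamma$ (the expected total number of emissions) is at most $\gamma\, n L/H^2$; in particular it is $O(nL\gamma/H^2)$, independent of $m$.
   Context: Let $A=(a_{ki})$ be an $m\times n$ real matrix with rows $r_1,\dots,r_m$ and columns $c_1,\dots,c_n$; $\|c_i\|$ is the Euclidean norm of column $i$ (assumed nonzero). DIMSUM with parameter $\gamma>0$ is the following randomized procedure. For each pair of distinct column indices $(i,j)$ set $p_{ij}=\min\!\left(1,\frac{\gamma}{\|c_i\|\|c_j\|}\right)$. For each row $k$ and each pair $(i,j)$ with $a_{ki}a_{kj}\neq 0$, independently (over all $k$ and all pairs) with probability $p_{ij}$ the value $a_{ki}a_{kj}$ is emitted to key $(i,j)$ (one ''emission''). The shuffle size is the total number of emissions. *)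

(* Defs.v *)
From HB Require Import structures.
From mathcomp Require Import all_boot all_order all_algebra.
Set Implicit Arguments. Unset Strict Implicit. Unset Printing Implicit Defensive.
Import Order.TTheory GRing.Theory Num.Theory.
Local Open Scope ring_scope.

Section DIMSUM.
Variables (R : rcfType) (m n : nat).

Definition colnorm (A : 'M[R]_(m, n)) (i : 'I_n) : R :=
  Num.sqrt (\sum_(k < m) A k i ^+ 2).

Definition dimsum_p (gamma : R) (A : 'M[R]_(m, n)) (i j : 'I_n) : R :=
  Num.min 1 (gamma / (colnorm A i * colnorm A j)).

(* A potential emission: row k, ordered pair (i,j) of distinct columns,
   with a_ki a_kj <> 0. *)
Definition eligible (A : 'M[R]_(m, n)) (t : 'I_m * 'I_n * 'I_n) : bool :=
  let: (k, i, j) := t in (i != j) && (A k i * A k j != 0).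

(* An outcome of the randomized procedure: for each triple (k,i,j),
   whether the value a_ki a_kj was emitted to key (i,j). *)
Definition outcome := {ffun 'I_m * 'I_n * 'I_n -> bool}.

(* Probability of an outcome: independent Bernoulli(p_ij) coins for the
   eligible triples; ineligible triples never emit. *)
Definition outcome_prob (gamma : R) (A : 'M[R]_(m, n)) (w : outcome) : R :=
  \prod_(t : 'I_m * 'I_n * 'I_n)
    (if eligible A t then
       (let: (_, i, j) := t in
        if w t then dimsum_p gamma A i j else 1 - dimsum_p gamma A i j)
     else (if w t then 0 else 1)).

Definition shuffle_size (A : 'M[R]_(m, n)) (w : outcome) : nat :=
  #|[set t | eligible A t && w t]|.

Definition expected_shuffle_size (gamma : R) (A : 'M[R]_(m, n)) : R :=
  \sum_(w : outcome) outcome_prob gamma A w * (shuffle_size A w)%:R.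

End DIMSUM.

(* Main.v *)
Require Import Defs.
From HB Require Import structures.
From mathcomp Require Import all_boot all_order all_algebra.
From mathcomp Require Import ring lra.
Import Order.TTheory GRing.Theory Num.Theory.
Local Open Scope ring_scope.
Set Implicit Arguments. Unset Strict Implicit.

Section S.
Variables (R : rcfType) (m n : nat) (gamma : R) (A : 'M[R]_(m, n)).
Local Notation T := ('I_m * 'I_n * 'I_n)%type.

Definition fc (t : T) (b : bool) : R :=
  if eligible A t then
       (let: (_, i, j) := t in
        if b then dimsum_p gamma A i j else 1 - dimsum_p gamma A i j)
     else (if b then 0 else 1).

Definition pt (t : T) : R := if eligible A t then dimsum_p gamma A t.1.2 t.2 else 0.

Lemma fc_sum t : \sum_b fc t b = 1.
Proof.
rewrite big_bool /fc; case: (eligible A t); last by rewrite /= add0r.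
by case: t => [[k i] j] /=; rewrite addrC subrK.
Qed.

Lemma fc_true t : fc t true = pt t.
Proof. by rewrite /fc /pt; case: (eligible A t) => //; case: t => [[k i] j]. Qed.

Lemma one_term t :
  \sum_(w : outcome m n) outcome_prob gamma A w * (if eligible A t && w t then 1 else 0)
  = pt t.
Proof.
pose F := fun s b => fc s b * (if s == t then (if eligible A t && b then 1 else 0) else 1).
have E1 : forall w : outcome m n, outcome_prob gamma A w *
      (if eligible A t && w t then 1 else 0) = \prod_s F s (w s).
  move=> w; rewrite /F big_split /=; congr (_ * _).
  rewrite (bigD1 t) //= eqxx big1 ?mulr1 // => s /negPf ->; done.
under eq_bigr do rewrite E1.
rewrite -(bigA_distr_bigA F) (bigD1 t) //= [X in _ * X]big1 ?mulr1.
  rewrite big_bool /F eqxx /= andbT andbF mulr0 addr0.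
  case: ifP => H; rewrite ?mulr1 ?mulr0 ?fc_true ?/pt ?H //.
move=> s /negPf Hs; rewrite /F Hs; under eq_bigr do rewrite mulr1; exact: fc_sum.
Qed.

Lemma E_eq : expected_shuffle_size gamma A = \sum_t pt t.
Proof.
rewrite /expected_shuffle_size.
have E2 : forall w : outcome m n, (shuffle_size A w)%:R =
   \sum_t (if eligible A t && w t then 1 else 0 : R).
  move=> w; rewrite /shuffle_size -big_mkcond /= sumr_const.
  by apply/eqP; rewrite -mulr_natl mulr1 eqr_nat; apply/eqP; apply: eq_card => x; rewrite inE.
under eq_bigr do rewrite E2 mulr_sumr.
rewrite exchange_big /=; apply: eq_bigr => t _; exact: one_term.
Qed.
End S.
Theorem theorem4 (R : rcfType) (m n L : nat) (A : 'M[R]_(m, n))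
    (gamma H : R) (hgamma : 0 < gamma)
    (hentries : forall k i, -1 <= A k i <= 1)
    (hcol : forall i : 'I_n, exists k : 'I_m, A k i != 0)
    (hrow : forall k : 'I_m, (#|[set i : 'I_n | A k i != 0%R]| <= L)%N)
    (hH_min : forall k i, A k i != 0 -> H <= `|A k i|)
    (hH_att : exists k i, A k i != 0 /\ `|A k i| = H) :
  expected_shuffle_size gamma A <= gamma * n%:R * L%:R / H ^+ 2.
Proof.
have Hpos : 0 < H.
  by case: hH_att => k [i [nz <-]]; rewrite normr_gt0.
pose c2 i := \sum_(k < m) A k i ^+ 2.
pose ind k i := (if A k i != 0 then 1 else 0 : R).
pose g k i j := (if eligible A (k, i, j) then 1 else 0 : R).
have c2ge : forall i, H ^+ 2 * \sum_k ind k i <= c2 i.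
  move=> i; rewrite mulr_sumr; apply: ler_sum => k _; rewrite /ind.
  case: ifP => nz; last by rewrite mulr0 sqr_ge0.
  have h := hH_min k i nz; have h0 := normr_ge0 (A k i); rewrite mulr1 -(real_normK (num_real (A k i))) !expr2; apply: ler_pM => //; exact: ltW.
have c2pos : forall i, 0 < c2 i.
  move=> i; case: (hcol i) => k nz; apply: lt_le_trans (c2ge i).
  apply: mulr_gt0; first exact: exprn_gt0.
  rewrite (bigD1 k) //= /ind nz; apply: ltr_pwDl => //.
  by apply: sumr_ge0 => l _; case: ifP.
have cn2 : forall i, colnorm A i ^+ 2 = c2 i.
  by move=> i; rewrite /colnorm sqr_sqrtr //; exact: ltW (c2pos i).
have cnpos : forall i, 0 < colnorm A i.
  by move=> i; rewrite /colnorm sqrtr_gt0; exact: c2pos.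
have step1 : forall t, pt gamma A t <=
    gamma / 2 * (g t.1.1 t.1.2 t.2 * (c2 t.1.2)^-1) +
    gamma / 2 * (g t.1.1 t.1.2 t.2 * (c2 t.2)^-1).
  case=> [[k i] j]; rewrite /pt /g /=; case: ifP => _; last by rewrite !mul0r !mulr0 addr0.
  rewrite !mul1r -!cn2.
  apply: le_trans (_ : gamma / (colnorm A i * colnorm A j) <= _).
    by rewrite /dimsum_p ge_min lexx orbT.
  have ha := cnpos i; have hb := cnpos j.
  set a := colnorm A i; set b := colnorm A j.
  rewrite invfM -!exprVn.
  have ha' : 0 < a^-1 by rewrite invr_gt0.
  have hb' : 0 < b^-1 by rewrite invr_gt0.
  set u := a^-1 in ha' *; set v := b^-1 in hb' *.
  rewrite -mulrDr -mulrA ler_pM2l //.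
  have : 0 <= (u - v) ^+ 2 by exact: sqr_ge0.
  move=> h; nra.
have tri : forall F : 'I_m * 'I_n * 'I_n -> R,
    \sum_t F t = \sum_k \sum_i \sum_j F (k, i, j).
  move=> F; rewrite pair_big /= pair_big /=; apply: eq_bigr; by case=> [[k i] j].
have gsym : forall k i j, g k i j = g k j i.
  by move=> k i j; rewrite /g /eligible eq_sym mulrC.
have gle : forall k i j, g k i j <= ind k i * ind k j.
  move=> k i j; rewrite /g /ind /eligible; case: (i != j) => /=; last first.
    by apply: mulr_ge0; case: ifP.
  have [->|ni] := eqVneq (A k i) 0; first by rewrite mul0r eqxx /= mul0r.
  have [->|nj] := eqVneq (A k j) 0; first by rewrite mulr0 eqxx /= mulr0.
  by rewrite mulf_neq0 // /= mulr1.
have rowL : forall k, \sum_j ind k j <= L%:R.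
  move=> k; rewrite /ind -big_mkcond /= sumr_const -mulr_natl mulr1 ler_nat.
  apply: leq_trans (hrow k); rewrite leq_eqVlt; apply/orP; left; apply/eqP.
  by apply: eq_card => x; rewrite inE.
rewrite E_eq; apply: le_trans (ler_sum _ (fun t _ => step1 t)) _.
rewrite big_split /= -!mulr_sumr !tri.
set S1 := \sum_k \sum_i \sum_j g k i j * (c2 i)^-1.
have -> : \sum_k \sum_i \sum_j g k i j * (c2 j)^-1 = S1.
  apply: eq_bigr => k _; rewrite exchange_big /=; apply: eq_bigr => i _.
  by apply: eq_bigr => j _; rewrite gsym.
have S1le : S1 <= \sum_k \sum_i ind k i * (c2 i)^-1 * L%:R.
  apply: ler_sum => k _; apply: ler_sum => i _.
  have hc := ltW (c2pos i); rewrite -mulr_suml mulrAC ler_wpM2r ?invr_ge0 //.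
  apply: le_trans (_ : \sum_j ind k i * ind k j <= _).
    by apply: ler_sum => j _; apply: gle.
  rewrite -mulr_sumr ler_wpM2l ?rowL //; rewrite /ind; by case: ifP.
have S2le : \sum_k \sum_i ind k i * (c2 i)^-1 * L%:R <= L%:R * n%:R / H ^+ 2.
  rewrite exchange_big /=.
  apply: le_trans (_ : \sum_(i < n) L%:R / H ^+ 2 <= _); last first.
    by rewrite sumr_const card_ord -[_ *+ n]mulr_natr mulrAC.
  apply: ler_sum => i _; rewrite -mulr_suml -mulr_suml mulrC.
  rewrite ler_wpM2l ?ler0n //.
  rewrite ler_pdivrMr ?c2pos // ler_pdivlMl ?exprn_gt0 //.
have S1pos : 0 <= S1.
  apply: sumr_ge0 => k _; apply: sumr_ge0 => i _; apply: sumr_ge0 => j _.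
  by apply: mulr_ge0; [rewrite /g; case: ifP | rewrite invr_ge0; exact: ltW (c2pos i)].
have h := le_trans S1le S2le.
have -> : gamma / 2 * S1 + gamma / 2 * S1 = gamma * S1 by field.
rewrite (_ : gamma * n%:R * L%:R / H^+2 = gamma * (L%:R * n%:R / H^+2)); last by field; rewrite gt_eqF.
by rewrite ler_pM2l.
Qed.
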